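(* Let $T(x)=\int_{\mathbb R}e^{-\sqrt2|x-y|}\mathrm{sech}^2(y)\,dy$. For integers $k\ge1$ set (integrals over $\mathbb R$ in $x$) $p_k=\int\mathrm{sech}^k\cos$, $q_k=\int\mathrm{sech}^k\log(\mathrm{sech})\cos$, $r_k=\int\mathrm{sech}^kT\cos$, $s_k=\int\mathrm{sech}^kT\tanh\sin$, $a_k=\int x\,\mathrm{sech}^k\tanh\cos$, $b_k=\int\mathrm{sech}^k\tanh\sin$, $c_k=\int\mathrm{sech}^k\log(\mathrm{sech})\tanh\sin$, $d_k=\int x\,\mathrm{sech}^k\sin$, $e_k=\int\mathrm{sech}^k\tanh\,T'\cos$, $f_k=\int\mathrm{sech}^kT'\sin$. Then for every integer $k\ge1$: \begin{align*} b_k&=(k+1)p_{k+2}-kp_k,\\ c_k&=(k+1)q_{k+2}-kq_k+p_{k+2}-p_k,\\ d_k&=-ka_k+p_k,\\ e_k&=s_k+kr_k-(k+1)r_{k+2},\\ f_k&=-r_k+ks_k. \end{align*}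
   Context: $\mathrm{sech},\tanh,\cos,\sin$ denote the functions $\mathrm{sech}(x),\tanh(x),\cos(x),\sin(x)$, products are pointwise, primes denote $d/dx$. *)

(* Defs.v *)
From Stdlib Require Import Reals.
From Coquelicot Require Import Coquelicot.
Open Scope R_scope.

Definition sech (x : R) : R := / cosh x.

Definition intR (f : R -> R) : R :=
  RInt_gen f (Rbar_locally m_infty) (Rbar_locally p_infty).

Definition T (x : R) : R :=
  intR (fun y => exp (- sqrt 2 * Rabs (x - y)) * (sech y) ^ 2).

Definition dT (x : R) : R := Derive T x.

Definition p_ (k : nat) : R := intR (fun x => sech x ^ k * cos x).
Definition q_ (k : nat) : R := intR (fun x => sech x ^ k * ln (sech x) * cos x).
Definition r_ (k : nat) : R := intR (fun x => sech x ^ k * T x * cos x).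
Definition s_ (k : nat) : R := intR (fun x => sech x ^ k * T x * tanh x * sin x).
Definition a_ (k : nat) : R := intR (fun x => x * sech x ^ k * tanh x * cos x).
Definition b_ (k : nat) : R := intR (fun x => sech x ^ k * tanh x * sin x).
Definition c_ (k : nat) : R := intR (fun x => sech x ^ k * ln (sech x) * tanh x * sin x).
Definition d_ (k : nat) : R := intR (fun x => x * sech x ^ k * sin x).
Definition e_ (k : nat) : R := intR (fun x => sech x ^ k * tanh x * dT x * cos x).
Definition f_ (k : nat) : R := intR (fun x => sech x ^ k * dT x * sin x).

(* Main.v *)
Require Import Defs.
From Stdlib Require Import Reals Lra Lia.
From Coquelicot Require Import Coquelicot.
Open Scope R_scope.


Lemma cosh_ge1 x : 1 <= cosh x.
Proof.
  unfold cosh. assert (H := exp_pos x). rewrite exp_Ropp.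
  assert (Hi : exp x * / exp x = 1) by (field; lra).
  assert (0 < / exp x) by (apply Rinv_0_lt_compat; lra).
  assert (0 <= (exp x - 1)^2) by apply pow2_ge_0.
  assert (exp x * (exp x + / exp x - 2) >= 0) by nra.
  assert (exp x + / exp x - 2 >= 0).
  { destruct (Rle_dec 0 (exp x + / exp x - 2)); [lra|]. nra. }
  lra.
Qed.

Lemma cosh_pos x : 0 < cosh x.
Proof. generalize (cosh_ge1 x); lra. Qed.

Lemma sech_pos x : 0 < sech x.
Proof. unfold sech; apply Rinv_0_lt_compat, cosh_pos. Qed.

Lemma sech_le1 x : sech x <= 1.
Proof. unfold sech. rewrite <- Rinv_1. apply Rinv_le_contravar; [lra| apply cosh_ge1]. Qed.

Lemma tanh_sech x : tanh x ^ 2 = 1 - sech x ^ 2.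
Proof.
  unfold tanh, sech, sinh, cosh. assert (H := exp_pos x). rewrite exp_Ropp.
  assert (Hi : exp x * / exp x = 1) by (field; lra).
  assert (0 < / exp x) by (apply Rinv_0_lt_compat; lra).
  assert (exp x + / exp x <> 0) by lra.
  field. split; nra.
Qed.

Lemma tanh_abs x : Rabs (tanh x) <= 1.
Proof.
  assert (H := tanh_sech x). assert (H2 := sech_pos x).
  apply Rabs_le. nra.
Qed.

Lemma sech_exp x : sech x * exp (Rabs x) <= 2.
Proof.
  unfold sech, cosh. assert (H1 := exp_pos x). assert (H2 := exp_pos (-x)).
  assert (exp x * exp (-x) = 1) by (rewrite <- exp_plus; replace (x + - x) with 0 by ring; apply exp_0).
  destruct (Rle_dec 0 x).
  - rewrite Rabs_right by lra.
    apply Rmult_le_reg_r with ((exp x + exp (-x))/2); [lra|].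
    field_simplify; [nra|lra].
  - rewrite Rabs_left by lra.
    apply Rmult_le_reg_r with ((exp x + exp (-x))/2); [lra|].
    field_simplify; [nra|lra].
Qed.

Lemma lnsech_abs x : Rabs (ln (sech x)) <= Rabs x.
Proof.
  unfold sech. rewrite ln_Rinv by apply cosh_pos. rewrite Rabs_Ropp.
  assert (H1 := cosh_ge1 x).
  assert (0 <= ln (cosh x)) by (rewrite <- ln_1; apply ln_le; lra).
  rewrite Rabs_right by lra.
  assert (cosh x <= exp (Rabs x)).
  { unfold cosh. destruct (Rle_dec 0 x).
    - rewrite Rabs_right by lra. assert (exp (-x) <= exp x) by (destruct (Req_dec x 0) as [->|]; [rewrite Ropp_0; lra| left; apply exp_increasing; lra]). lra.
    - rewrite Rabs_left by lra. assert (exp x <= exp (-x)) by (left; apply exp_increasing; lra). lra. }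
  rewrite <- (ln_exp (Rabs x)). apply ln_le; lra.
Qed.

Lemma exp_sq t : 0 <= t -> t ^ 2 <= 4 * exp t.
Proof.
  intros Ht. assert (E : exp t = exp (t/2) * exp (t/2)) by (rewrite <- exp_plus; f_equal; field).
  assert (H := exp_ineq1_le (t/2)). rewrite E. nra.
Qed.

Lemma exp_cube t : 0 <= t -> t ^ 3 <= 27 * exp t.
Proof.
  intros Ht. assert (E : exp t = exp (t/3) * exp (t/3) * exp (t/3)) by (rewrite <- !exp_plus; f_equal; field).
  assert (H := exp_ineq1_le (t/3)). rewrite E.
  assert (0 <= t/3 <= exp (t/3)) by lra.
  assert (t/3 * (t/3) <= exp (t/3) * exp (t/3)) by (apply Rmult_le_compat; lra).
  assert (t/3 * (t/3) * (t/3) <= exp (t/3) * exp (t/3) * exp (t/3)) by (apply Rmult_le_compat; nra).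
  nra.
Qed.

Lemma K1 x : x ^ 2 * ((1 + Rabs x) * sech x) <= 62.
Proof.
  assert (H := sech_exp x). assert (Hs := sech_pos x). assert (He := exp_pos (Rabs x)).
  assert (Ha := Rabs_pos x).
  assert (h1 := exp_sq _ Ha). assert (h2 := exp_cube _ Ha).
  assert (x ^ 2 = Rabs x ^ 2) by (rewrite RPow_abs, Rabs_right; [auto| apply Rle_ge; apply pow2_ge_0]).
  rewrite H0.
  assert (Rabs x ^ 2 * (1 + Rabs x) <= 31 * exp (Rabs x)) by nra.
  assert (Rabs x ^ 2 * (1 + Rabs x) * sech x <= 31 * exp (Rabs x) * sech x) by (apply Rmult_le_compat_r; lra).
  nra.
Qed.


Lemma DReq (f : R -> R) (x d d' : R) : is_derive f x d -> d = d' -> is_derive f x d'.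
Proof. intros H ->; exact H. Qed.

Lemma DRmul (f g : R -> R) (x df dg : R) : is_derive f x df -> is_derive g x dg ->
  is_derive (fun t => f t * g t) x (df * g x + f x * dg).
Proof. intros H1 H2. apply (is_derive_mult f g x df dg H1 H2). intros; apply Rmult_comm. Qed.

Lemma DRplus (f g : R -> R) (x df dg : R) : is_derive f x df -> is_derive g x dg ->
  is_derive (fun t => f t + g t) x (df + dg).
Proof. intros H1 H2. apply (is_derive_plus f g x df dg H1 H2). Qed.

Lemma DRopp (f : R -> R) (x df : R) : is_derive f x df -> is_derive (fun t => - f t) x (- df).
Proof. intros H1. apply (is_derive_opp f x df H1). Qed.

Lemma DRid (x : R) : is_derive (fun t => t) x 1.
Proof. apply (is_derive_id x). Qed.

Lemma Dcos (x : R) : is_derive cos x (- sin x).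
Proof. auto_derive; auto; ring. Qed.

Lemma Dsin (x : R) : is_derive sin x (cos x).
Proof. auto_derive; auto; ring. Qed.

Lemma Dsech (x : R) : is_derive sech x (- sech x * tanh x).
Proof.
  unfold sech, tanh, sinh, cosh.
  assert (H := cosh_pos x). unfold cosh in H.
  auto_derive. lra. simpl. field. lra.
Qed.

Lemma Dtanh (x : R) : is_derive tanh x (sech x ^ 2).
Proof.
  unfold sech, tanh, sinh, cosh.
  assert (H := cosh_pos x). unfold cosh in H.
  auto_derive. lra. simpl. rewrite exp_Ropp in *. assert (H1 := exp_pos x).
  assert (0 < / exp x) by (apply Rinv_0_lt_compat; lra).
  field. split; nra.
Qed.

Lemma Dsechk k (x : R) : is_derive (fun t => sech t ^ k) x (- INR k * sech x ^ k * tanh x).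
Proof.
  induction k as [|k IH].
  - simpl. apply (DReq _ _ 0). apply (is_derive_const (K := R_AbsRing) (V := R_NormedModule) 1 x). ring.
  - eapply DReq. apply (DRmul sech (fun t => sech t ^ k)). apply Dsech. apply IH.
    rewrite S_INR. simpl. ring.
Qed.

Lemma Dlnsech (x : R) : is_derive (fun t => ln (sech t)) x (- tanh x).
Proof.
  unfold sech, tanh, sinh, cosh.
  assert (H := cosh_pos x). unfold cosh in H.
  auto_derive. split; [lra|]. split; [|auto]. apply Rinv_0_lt_compat; lra. simpl. field. lra.
Qed.

Lemma Cd (f : R -> R) (x d : R) : is_derive f x d -> continuous f x.
Proof. intros H. apply (ex_derive_continuous (K := R_AbsRing) (V := R_NormedModule) f x). exists d; exact H. Qed.

Lemma Kmul (f g : R -> R) x : continuous f x -> continuous g x -> continuous (fun t => f t * g t) x.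
Proof. intros; apply (continuous_mult f g); auto. Qed.

Lemma Kplus (f g : R -> R) x : continuous f x -> continuous g x -> continuous (fun t => f t + g t) x.
Proof. intros; apply (continuous_plus f g); auto. Qed.

Lemma Kopp (f : R -> R) x : continuous f x -> continuous (fun t => - f t) x.
Proof. intros; apply (continuous_opp f); auto. Qed.

Lemma Kminus (f g : R -> R) x : continuous f x -> continuous g x -> continuous (fun t => f t - g t) x.
Proof. intros; apply (continuous_minus f g); auto. Qed.

Lemma Kconst (c x : R) : continuous (fun _ => c) x.
Proof. apply continuous_const. Qed.

Lemma Kid (x : R) : continuous (fun t => t) x.
Proof. apply continuous_id. Qed.

Lemma Csech x : continuous sech x. Proof. eapply Cd, Dsech. Qed.
Lemma Ctanh x : continuous tanh x. Proof. eapply Cd, Dtanh. Qed.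
Lemma Ccos x : continuous cos x. Proof. eapply Cd, Dcos. Qed.
Lemma Csin x : continuous sin x. Proof. eapply Cd, Dsin. Qed.
Lemma Csechk k x : continuous (fun t => sech t ^ k) x. Proof. eapply Cd, Dsechk. Qed.
Lemma Clnsech x : continuous (fun t => ln (sech t)) x. Proof. eapply Cd, Dlnsech. Qed.


Definition IG (f : R -> R) (l : R) :=
  is_RInt_gen f (Rbar_locally m_infty) (Rbar_locally p_infty) l.

Lemma IG_intR f l : IG f l -> intR f = l.
Proof. intros H. unfold intR. apply (is_RInt_gen_unique f l H). Qed.

Lemma IG_plus f g lf lg : IG f lf -> IG g lg -> IG (fun x => f x + g x) (lf + lg).
Proof. intros H1 H2. apply (is_RInt_gen_plus f g lf lg H1 H2). Qed.

Lemma IG_minus f g lf lg : IG f lf -> IG g lg -> IG (fun x => f x - g x) (lf - lg).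
Proof. intros H1 H2. apply (is_RInt_gen_minus f g lf lg H1 H2). Qed.

Lemma IG_scal f k l : IG f l -> IG (fun x => k * f x) (k * l).
Proof. intros H1. apply (is_RInt_gen_scal f k l H1). Qed.

Lemma IG_ext f g l : (forall x, f x = g x) -> IG f l -> IG g l.
Proof. intros E H. eapply is_RInt_gen_ext; [|exact H]. apply filter_forall. intros; apply E. Qed.

Lemma IG_eql f l l' : IG f l -> l = l' -> IG f l'.
Proof. intros H ->; exact H. Qed.

Lemma is_RInt_gen_of (f : R -> R) (If : R * R -> R) Fa Fb l :
  Filter Fa -> Filter Fb ->
  filter_prod Fa Fb (fun ab => is_RInt f (fst ab) (snd ab) (If ab)) ->
  filterlim If (filter_prod Fa Fb) (locally l) -> is_RInt_gen f Fa Fb l.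
Proof.
  intros FA FB H1 H2 P HP.
  unfold filtermapi.
  apply filter_imp with (fun ab => is_RInt f (fst ab) (snd ab) (If ab) /\ P (If ab)).
  - intros ab [Ha Hb]. exists (If ab). split; auto.
  - apply filter_and; auto. apply H2; auto.
Qed.

Lemma ball_R (x y eps : R) : Rabs (y - x) < eps -> ball x eps y.
Proof. intros H. exact H. Qed.

Lemma RInt_1x2 (C u v : R) : (0 < u \/ v < 0) -> u <= v ->
  RInt (fun t => C / t ^ 2) u v = C / u - C / v.
Proof.
  intros Hs Huv.
  assert (Hnz : forall t, u <= t <= v -> t <> 0) by (intros; lra).
  apply is_RInt_unique.
  assert (E : C / u - C / v = minus ((fun t => - C / t) v) ((fun t => - C / t) u)).
  { unfold minus, plus, opp; simpl. field. split; apply Hnz; lra. }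
  rewrite E. apply (is_RInt_derive (V := R_CompleteNormedModule) (fun t => - C / t) (fun t => C / t ^ 2)).
  - intros x Hx. rewrite Rmin_left, Rmax_right in Hx by lra.
    assert (x <> 0) by (apply Hnz; lra).
    auto_derive; auto. simpl. field; auto.
  - intros x Hx. rewrite Rmin_left, Rmax_right in Hx by lra.
    assert (x <> 0) by (apply Hnz; lra).
    apply (Cd _ _ (- 2 * C / x ^ 3)). auto_derive; auto. simpl. field; auto.
Qed.

Lemma exRc (f : R -> R) a b : (forall x, continuous f x) -> ex_RInt f a b.
Proof. intros H. apply (ex_RInt_continuous (V := R_CompleteNormedModule)). intros; apply H. Qed.

Lemma RIc (f : R -> R) a b : (forall x, continuous f x) -> is_RInt f a b (RInt f a b).
Proof. intros H. apply (RInt_correct (V := R_CompleteNormedModule)). apply exRc; auto. Qed.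

Lemma posc C M a b : 0 <= C -> 1 <= M -> M <= a <= b -> Rabs (C / a - C / b) <= C / M.
Proof.
  intros HC HM Hab.
  assert (C / b <= C / a) by (unfold Rdiv; apply Rmult_le_compat_l; auto; apply Rinv_le_contravar; lra).
  assert (C / a <= C / M) by (unfold Rdiv; apply Rmult_le_compat_l; auto; apply Rinv_le_contravar; lra).
  assert (0 <= C / b) by (unfold Rdiv; apply Rmult_le_pos; auto; left; apply Rinv_0_lt_compat; lra).
  rewrite Rabs_right; lra.
Qed.

Lemma TB (f : R -> R) C M u v :
  (forall x, continuous f x) -> (forall x, x ^ 2 * Rabs (f x) <= C) -> 1 <= M ->
  ((M <= u /\ M <= v) \/ (u <= -M /\ v <= -M)) ->
  Rabs (RInt f u v) <= C / M.
Proof.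
  intros Hc Hb HM.
  assert (HC : 0 <= C) by (generalize (Hb 0); generalize (Rabs_pos (f 0)); intros; simpl in *; nra).
  assert (main : forall u v, u <= v -> ((M <= u /\ M <= v) \/ (u <= -M /\ v <= -M)) ->
     Rabs (RInt f u v) <= C / M).
  { clear u v. intros u v Huv Huv2.
    eapply Rle_trans. apply abs_RInt_le; auto. apply exRc; auto.
    assert (Hnz : forall t, u <= t <= v -> M <= Rabs t).
    { intros t Ht. destruct Huv2; [rewrite Rabs_right|rewrite Rabs_left]; lra. }
    eapply Rle_trans. apply RInt_le with (g := fun t => C / t ^ 2); auto.
    - apply exRc. intros. apply continuous_comp. apply Hc. apply continuous_Rabs.
    - apply (ex_RInt_continuous (V := R_CompleteNormedModule)). intros z Hz. rewrite Rmin_left, Rmax_right in Hz by lra.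
      assert (z <> 0) by (intro; subst; assert (H0 := Hnz 0 Hz); rewrite Rabs_R0 in H0; lra).
      apply (Cd _ _ (- 2 * C / z ^ 3)). auto_derive; auto. simpl. field; auto.
    - intros t Ht. assert (H1 := Hnz t (conj (Rlt_le _ _ (proj1 Ht)) (Rlt_le _ _ (proj2 Ht)))).
      assert (Ht2 : 0 < t ^ 2) by (rewrite <- (Rabs_right (t^2)), <- RPow_abs by (apply Rle_ge, pow2_ge_0); simpl; nra).
      unfold Rdiv. apply Rmult_le_reg_l with (t ^ 2); auto.
      rewrite <- Rmult_assoc, (Rmult_comm (t^2) C), Rmult_assoc, Rinv_r by lra. rewrite Rmult_1_r. apply Hb.
    - rewrite RInt_1x2 by lra.
      destruct Huv2.
      + eapply Rle_trans; [apply Rle_abs| apply posc; auto; lra].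
      + replace (C / u - C / v) with (C / (-v) - C / (-u)) by (field; lra).
        eapply Rle_trans; [apply Rle_abs| apply posc; auto; lra]. }
  intros H. destruct (Rle_dec u v). apply main; auto.
  rewrite <- (opp_RInt_swap (V := R_CompleteNormedModule)) by (apply exRc; auto).
  unfold opp; simpl. rewrite Rabs_Ropp. apply main; [lra|]. tauto.
Qed.

Lemma CM_eps C (eps : posreal) : 0 <= C -> C / Rmax 1 (C / eps + 1) < eps.
Proof.
  intros HC. assert (He := cond_pos eps).
  set (M := Rmax 1 (C / eps + 1)).
  assert (H1 : 1 <= M) by apply Rmax_l. assert (H2 : C / eps + 1 <= M) by apply Rmax_r.
  assert (E : C = eps * (C / eps)) by (field; lra).
  apply Rmult_lt_reg_r with M; [lra|]. unfold Rdiv. rewrite Rmult_assoc, Rinv_l by lra.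
  nra.
Qed.

Lemma bound_C0 (f : R -> R) C : (forall x, x ^ 2 * Rabs (f x) <= C) -> 0 <= C.
Proof. intros Hb. generalize (Hb 0); generalize (Rabs_pos (f 0)); intros; simpl in *; nra. Qed.

Lemma HLp (f : R -> R) C : (forall x, continuous f x) -> (forall x, x ^ 2 * Rabs (f x) <= C) ->
  exists l, filterlim (fun b => RInt f 0 b) (Rbar_locally p_infty) (locally l).
Proof.
  intros Hc Hb. assert (HC := bound_C0 f C Hb).
  apply (proj1 (filterlim_locally_cauchy (U := R_CompleteSpace) (F := Rbar_locally p_infty) (fun b => RInt f 0 b))).
  intros eps. set (M := Rmax 1 (C / eps + 1)).
  exists (fun x => M < x). split. exists M; auto.
  intros u v Hu Hv. apply ball_R.
  assert (E : RInt f 0 u + RInt f u v = RInt f 0 v) by (apply (RInt_Chasles (V := R_CompleteNormedModule) f 0 u v); apply exRc; auto).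
  rewrite <- E. assert (Q : forall a b : R, a + b - a = b) by (intros; ring). rewrite Q.
  eapply Rle_lt_trans. apply (TB f C M); auto. apply Rmax_l. left; lra.
  apply CM_eps; auto.
Qed.

Lemma HLm (f : R -> R) C : (forall x, continuous f x) -> (forall x, x ^ 2 * Rabs (f x) <= C) ->
  exists l, filterlim (fun a => RInt f a 0) (Rbar_locally m_infty) (locally l).
Proof.
  intros Hc Hb. assert (HC := bound_C0 f C Hb).
  apply (proj1 (filterlim_locally_cauchy (U := R_CompleteSpace) (F := Rbar_locally m_infty) (fun a => RInt f a 0))).
  intros eps. set (M := Rmax 1 (C / eps + 1)).
  exists (fun x => x < - M). split. exists (- M); auto.
  intros u v Hu Hv. apply ball_R.
  assert (E : RInt f v u + RInt f u 0 = RInt f v 0) by (apply (RInt_Chasles (V := R_CompleteNormedModule) f v u 0); apply exRc; auto).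
  rewrite <- E. assert (Q : forall a b : R, a + b - b = a) by (intros; ring). rewrite Q.
  eapply Rle_lt_trans. apply (TB f C M); auto. apply Rmax_l. right; lra.
  apply CM_eps; auto.
Qed.

Lemma lim_sum_prod (h1 h2 : R -> R) l1 l2 :
  filterlim h1 (Rbar_locally m_infty) (locally l1) ->
  filterlim h2 (Rbar_locally p_infty) (locally l2) ->
  filterlim (fun ab : R * R => h1 (fst ab) + h2 (snd ab))
    (filter_prod (Rbar_locally m_infty) (Rbar_locally p_infty)) (locally (l1 + l2)).
Proof.
  intros H1 H2.
  apply (filterlim_comp_2 (fun ab : R * R => h1 (fst ab)) (fun ab : R * R => h2 (snd ab)) Rplus
    (G := locally l1) (H := locally l2)).
  - eapply filterlim_comp. apply filterlim_fst. exact H1.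
  - eapply filterlim_comp. apply filterlim_snd. exact H2.
  - apply (filterlim_plus (K := R_AbsRing) (V := R_NormedModule) l1 l2).
Qed.

Lemma exR (f : R -> R) C : (forall x, continuous f x) -> (forall x, x ^ 2 * Rabs (f x) <= C) ->
  IG f (intR f).
Proof.
  intros Hc Hb.
  destruct (HLm f C Hc Hb) as [l1 H1]. destruct (HLp f C Hc Hb) as [l2 H2].
  assert (IG f (l1 + l2)).
  { apply (is_RInt_gen_of f (fun ab => RInt f (fst ab) 0 + RInt f 0 (snd ab))).
    - apply Rbar_locally_filter.
    - apply Rbar_locally_filter.
    - apply filter_forall. intros [a b]. simpl.
      assert (E : RInt f a 0 + RInt f 0 b = RInt f a b) by (apply (RInt_Chasles (V := R_CompleteNormedModule) f a 0 b); apply exRc; auto).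
      rewrite E. apply RIc; auto.
    - apply (lim_sum_prod (fun a => RInt f a 0) (fun b => RInt f 0 b)); auto. }
  rewrite (IG_intR f (l1 + l2)); auto.
Qed.

Lemma IG_deriv0 (F f : R -> R) :
  (forall x, is_derive F x (f x)) -> (forall x, continuous f x) ->
  filterlim F (Rbar_locally m_infty) (locally 0) ->
  filterlim F (Rbar_locally p_infty) (locally 0) ->
  IG f 0.
Proof.
  intros HD Hc H1 H2.
  apply (is_RInt_gen_of f (fun ab => - F (fst ab) + F (snd ab))).
  - apply Rbar_locally_filter.
  - apply Rbar_locally_filter.
  - apply filter_forall. intros [a b]. simpl.
    replace (- F a + F b) with (minus (F b) (F a)) by (unfold minus, plus, opp; simpl; ring).
    apply (is_RInt_derive (V := R_CompleteNormedModule) F f); intros; auto.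
  - replace 0 with (-0 + 0) by ring. apply (lim_sum_prod (fun a => - F a) F); auto.
    eapply filterlim_comp. exact H1.
    replace (-0) with (opp 0 : R) by (unfold opp; simpl; ring).
    apply (filterlim_opp (K := R_AbsRing) (V := R_NormedModule) 0).
Qed.

Definition W (x : R) := (1 + Rabs x) * sech x.

Lemma W_pos x : 0 < W x.
Proof. unfold W. assert (H := sech_pos x). assert (H2 := Rabs_pos x). nra. Qed.

Lemma dom_C0 (f : R -> R) C : (forall x, Rabs (f x) <= C * W x) -> 0 <= C.
Proof.
  intros H. generalize (H 0) (W_pos 0) (Rabs_pos (f 0)). intros. nra.
Qed.

Lemma dom_sq (f : R -> R) C : (forall x, Rabs (f x) <= C * W x) -> forall x, x ^ 2 * Rabs (f x) <= 62 * C.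
Proof.
  intros H x. assert (HC := dom_C0 f C H). assert (K := K1 x). fold (W x) in K.
  assert (0 <= x ^ 2) by apply pow2_ge_0.
  assert (x ^ 2 * Rabs (f x) <= x ^ 2 * (C * W x)) by (apply Rmult_le_compat_l; auto).
  nra.
Qed.

Lemma exD (f : R -> R) C : (forall x, continuous f x) -> (forall x, Rabs (f x) <= C * W x) ->
  IG f (intR f).
Proof. intros Hc H. apply (exR f (62 * C)); auto. apply dom_sq; auto. Qed.

Lemma decay0 (F : R -> R) C : (forall x, Rabs (F x) <= C * W x) ->
  filterlim F (Rbar_locally m_infty) (locally 0) /\ filterlim F (Rbar_locally p_infty) (locally 0).
Proof.
  intros H. assert (HC := dom_C0 F C H). assert (Hs := dom_sq F C H).
  assert (key : forall eps : posreal, forall x, Rmax 1 (62 * C / eps + 1) <= Rabs x -> Rabs (F x) < eps).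
  { intros eps x Hx. set (M := Rmax 1 (62 * C / eps + 1)) in *.
    assert (H1 : 1 <= M) by apply Rmax_l.
    assert (Hlt := CM_eps (62 * C) eps ltac:(lra)). fold M in Hlt.
    assert (Hx2 : x ^ 2 = Rabs x * Rabs x) by (rewrite <- Rabs_mult, Rabs_right; [simpl; ring| apply Rle_ge, Rle_0_sqr]).
    assert (Hsx := Hs x). rewrite Hx2 in Hsx.
    assert (Rabs x * Rabs (F x) <= 62 * C).
    { assert (0 <= Rabs (F x)) by apply Rabs_pos. assert (1 <= Rabs x) by lra.
      assert (0 <= Rabs x * Rabs (F x)) by (apply Rmult_le_pos; lra).
      assert (Rabs x * Rabs (F x) * 1 <= Rabs x * Rabs (F x) * Rabs x) by (apply Rmult_le_compat_l; lra).
      nra. }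
    assert (M * Rabs (F x) <= 62 * C) by (assert (0 <= Rabs (F x)) by apply Rabs_pos; nra).
    assert (Rabs (F x) <= 62 * C / M).
    { apply Rmult_le_reg_l with M; [lra|]. unfold Rdiv. rewrite (Rmult_comm (62 * C)), <- Rmult_assoc, Rinv_r, Rmult_1_l by lra. lra. }
    lra. }
  split; apply filterlim_locally; intros eps.
  - exists (- Rmax 1 (62 * C / eps + 1)). intros x Hx. apply ball_R. rewrite Rminus_0_r. apply key.
    rewrite Rabs_left; [lra|]. assert (1 <= Rmax 1 (62 * C / eps + 1)) by apply Rmax_l. lra.
  - exists (Rmax 1 (62 * C / eps + 1)). intros x Hx. apply ball_R. rewrite Rminus_0_r. apply key.
    rewrite Rabs_right; [lra|]. assert (1 <= Rmax 1 (62 * C / eps + 1)) by apply Rmax_l. lra.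
Qed.


Lemma sqrt2_bounds : 1 < sqrt 2 < 2.
Proof.
  assert (H := sqrt_sqrt 2 ltac:(lra)). assert (H0 := sqrt_pos 2).
  split; nra.
Qed.

Lemma Dexpl (s x : R) : is_derive (fun y => exp (s * y)) x (s * exp (s * x)).
Proof. auto_derive; auto. simpl; ring. Qed.

Lemma Cexpl (s x : R) : continuous (fun y => exp (s * y)) x.
Proof. eapply Cd, Dexpl. Qed.

Definition gs (s : R) (y : R) := exp (s * y) * sech y ^ 2.

Lemma Cgs s x : continuous (gs s) x.
Proof. unfold gs. apply Kmul. apply Cexpl. apply Csechk. Qed.

Lemma gs_pos s y : 0 <= gs s y.
Proof. unfold gs. assert (H := exp_pos (s * y)). assert (H2 := sech_pos y). apply Rmult_le_pos; [lra|]. apply pow_le; lra. Qed.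

Lemma gs_bound s : Rabs s < 2 -> forall x, x ^ 2 * Rabs (gs s x) <= 16 / (2 - Rabs s) ^ 2.
Proof.
  intros Hs x. set (al := 2 - Rabs s). assert (Hal : 0 < al) by (unfold al; lra).
  set (a := Rabs x). assert (Ha : 0 <= a) by apply Rabs_pos.
  rewrite Rabs_right by (apply Rle_ge, gs_pos). unfold gs.
  assert (E1 : exp (s * x) <= exp (Rabs s * a)).
  { assert (s * x <= Rabs s * a) by (unfold a; rewrite <- Rabs_mult; apply Rle_abs).
    destruct (Req_dec (s * x) (Rabs s * a)) as [E|E]; [rewrite E; lra| left; apply exp_increasing; lra]. }
  assert (PQ : exp (Rabs s * a) * exp (- (Rabs s * a)) = 1) by (rewrite <- exp_plus; replace (Rabs s * a + - (Rabs s * a)) with 0 by ring; apply exp_0).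
  assert (Eal : exp (al * a) = exp a * exp a * exp (- (Rabs s * a))) by (rewrite <- !exp_plus; f_equal; unfold al; ring).
  assert (Hse := sech_exp x). fold a in Hse.
  assert (Hsq := exp_sq (al * a) ltac:(nra)).
  assert (Hx2 : x ^ 2 = a ^ 2) by (unfold a; rewrite RPow_abs, Rabs_right; [auto| apply Rle_ge, pow2_ge_0]).
  rewrite Hx2.
  assert (Hq := exp_pos (- (Rabs s * a))). assert (Hp := exp_pos (s * x)). assert (Hsp := sech_pos x).
  assert (He := exp_pos a).
  assert (B1 : al ^ 2 * a ^ 2 <= 4 * (exp a * exp a * exp (- (Rabs s * a)))) by (rewrite <- Eal; replace (al ^ 2 * a ^ 2) with ((al * a) ^ 2) by ring; auto).
  assert (B2 : exp (s * x) * exp (- (Rabs s * a)) <= 1).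
  { rewrite <- PQ. apply Rmult_le_compat_r; lra. }
  assert (B3 : (sech x * exp a) ^ 2 <= 4) by (assert (0 <= sech x * exp a) by nra; nra).
  assert (B4 : al ^ 2 * (a ^ 2 * (exp (s * x) * sech x ^ 2)) <= 16).
  { assert (0 <= exp (s * x) * sech x ^ 2) by (apply Rmult_le_pos; [lra| apply pow_le; lra]).
    assert (al ^ 2 * a ^ 2 * (exp (s * x) * sech x ^ 2) <= 4 * (exp a * exp a * exp (- (Rabs s * a))) * (exp (s * x) * sech x ^ 2)) by (apply Rmult_le_compat_r; auto).
    assert (4 * (exp a * exp a * exp (- (Rabs s * a))) * (exp (s * x) * sech x ^ 2) = 4 * ((sech x * exp a) ^ 2) * (exp (s * x) * exp (- (Rabs s * a)))) by ring.
    assert (0 <= (sech x * exp a) ^ 2) by apply pow2_ge_0.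
    assert (4 * ((sech x * exp a) ^ 2) * (exp (s * x) * exp (- (Rabs s * a))) <= 4 * 4 * 1).
    { apply Rmult_le_compat; try lra. apply Rmult_le_pos; lra. }
    lra. }
  assert (Hal2 : 0 < al ^ 2) by (apply pow_lt; auto).
  apply Rmult_le_reg_l with (al ^ 2). auto.
  replace (al ^ 2 * (16 / al ^ 2)) with 16 by (field; lra). lra.
Qed.

Lemma RInt_expl s a b : s <> 0 -> RInt (fun y => exp (s * y)) a b = (exp (s * b) - exp (s * a)) / s.
Proof.
  intros Hs. apply is_RInt_unique.
  assert (E : (exp (s * b) - exp (s * a)) / s = minus ((fun y => exp (s * y) / s) b) ((fun y => exp (s * y) / s) a)).
  { unfold minus, plus, opp; simpl. field; auto. }
  rewrite E. apply (is_RInt_derive (V := R_CompleteNormedModule) (fun y => exp (s * y) / s) (fun y => exp (s * y))).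
  - intros x _. auto_derive; auto. simpl; field; auto.
  - intros; apply Cexpl.
Qed.

Lemma lim_affine (h : R -> R) F {FF : Filter F} (k m l : R) :
  filterlim h F (locally l) -> filterlim (fun a => k * (h a + m)) F (locally (k * (l + m))).
Proof.
  intros H. apply (filterlim_comp _ _ _ h (fun t => k * (t + m)) F (locally l)). exact H.
  apply (Kmul (fun _ => k) (fun t => t + m)). apply Kconst. apply Kplus. apply Kid. apply Kconst.
Qed.

Lemma lim_le (h : R -> R) (M l : R) F {FF : ProperFilter F} :
  F (fun a => h a <= M) -> filterlim h F (locally l) -> l <= M.
Proof.
  intros H1 H2. apply (filterlim_le (F := F) h (fun _ => M) l M); auto.
  apply filterlim_const.
Qed.

Lemma lim_ge (h : R -> R) (M l : R) F {FF : ProperFilter F} :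
  F (fun a => M <= h a) -> filterlim h F (locally l) -> M <= l.
Proof.
  intros H1 H2. apply (filterlim_le (F := F) (fun _ => M) h M l); auto.
  apply filterlim_const.
Qed.

Lemma T_facts : exists P1 P2 : R -> R,
  (forall x, T x = P1 x + P2 x) /\
  (forall x, is_derive T x (sqrt 2 * (P2 x - P1 x))) /\
  (forall x, 0 <= P1 x <= 1 / sqrt 2) /\ (forall x, 0 <= P2 x <= 1 / sqrt 2) /\
  (forall x, continuous P1 x) /\ (forall x, continuous P2 x).
Proof.
  set (c := sqrt 2). assert (Hc : 1 < c < 2) by apply sqrt2_bounds.
  set (g1 := gs c). set (g2 := gs (- c)).
  assert (Hg1c : forall x, continuous g1 x) by (intros; apply Cgs).
  assert (Hg2c : forall x, continuous g2 x) by (intros; apply Cgs).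
  assert (Hg1b := gs_bound c ltac:(rewrite Rabs_right; lra)).
  assert (Hg2b := gs_bound (- c) ltac:(rewrite Rabs_Ropp, Rabs_right; lra)).
  destruct (HLm g1 _ Hg1c Hg1b) as [l1 H1].
  destruct (HLp g2 _ Hg2c Hg2b) as [l2 H2].
  set (P1 := fun x => exp (- c * x) * (l1 + RInt g1 0 x)).
  set (P2 := fun x => exp (c * x) * (l2 + - RInt g2 0 x)).
  exists P1, P2.
  assert (L1 : forall x, filterlim (fun a => exp (- c * x) * RInt g1 a x) (Rbar_locally m_infty) (locally (P1 x))).
  { intros x. apply (filterlim_ext (fun a => exp (- c * x) * (RInt g1 a 0 + RInt g1 0 x))).
    - intros a. f_equal. apply (RInt_Chasles (V := R_CompleteNormedModule) g1 a 0 x); apply exRc; auto.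
    - apply (lim_affine (fun a => RInt g1 a 0)); [apply Rbar_locally_filter| auto]. }
  assert (L2 : forall x, filterlim (fun b => exp (c * x) * RInt g2 x b) (Rbar_locally p_infty) (locally (P2 x))).
  { intros x. apply (filterlim_ext (fun b => exp (c * x) * (RInt g2 0 b + - RInt g2 0 x))).
    - intros b. f_equal.
      assert (E : RInt g2 0 x + RInt g2 x b = RInt g2 0 b) by (apply (RInt_Chasles (V := R_CompleteNormedModule) g2 0 x b); apply exRc; auto).
      rewrite <- E. ring.
    - apply (lim_affine (fun b => RInt g2 0 b)); [apply Rbar_locally_filter| auto]. }
  assert (HT : forall x, T x = P1 x + P2 x).
  { intros x. unfold T. apply IG_intR.
    apply (is_RInt_gen_of _ (fun ab => exp (- c * x) * RInt g1 (fst ab) x + exp (c * x) * RInt g2 x (snd ab))).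
    - apply Rbar_locally_filter.
    - apply Rbar_locally_filter.
    - apply (Filter_prod _ _ _ (fun a => a < x) (fun b => x < b)).
      + exists x; intros y Hy; exact Hy.
      + exists x; intros y Hy; exact Hy.
      + intros a b Ha Hb. simpl.
        apply (is_RInt_Chasles (V := R_NormedModule)) with x.
        * apply (is_RInt_ext (V := R_NormedModule) (fun y => scal (exp (- c * x)) (g1 y))).
          -- intros y Hy. rewrite Rmin_left, Rmax_right in Hy by lra.
             unfold scal; simpl; unfold mult; simpl. unfold g1, gs. fold c.
             rewrite Rabs_right by lra. rewrite <- Rmult_assoc, <- exp_plus. f_equal. f_equal. ring.
          -- apply (is_RInt_scal (V := R_NormedModule)). apply RIc; auto.
        * apply (is_RInt_ext (V := R_NormedModule) (fun y => scal (exp (c * x)) (g2 y))).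
          -- intros y Hy. rewrite Rmin_left, Rmax_right in Hy by lra.
             unfold scal; simpl; unfold mult; simpl. unfold g2, gs. fold c.
             rewrite Rabs_left by lra. rewrite <- Rmult_assoc, <- exp_plus. f_equal. f_equal. ring.
          -- apply (is_RInt_scal (V := R_NormedModule)). apply RIc; auto.
    - apply (lim_sum_prod (fun a => exp (- c * x) * RInt g1 a x) (fun b => exp (c * x) * RInt g2 x b)); auto. }
  assert (Hexp : forall x, exp (- c * x) * exp (c * x) = 1).
  { intros x. rewrite <- exp_plus. replace (- c * x + c * x) with 0 by ring. apply exp_0. }
  assert (Hsech2 : forall y, sech y ^ 2 <= 1).
  { intros y. assert (H := sech_le1 y). assert (H' := sech_pos y). simpl. nra. }
  assert (Hc0 : c <> 0) by lra.
  split; [exact HT|].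
  assert (DI1 : forall x, is_derive (fun x => RInt g1 0 x) x (g1 x)).
  { intros x. apply (is_derive_RInt (V := R_NormedModule) g1 (fun x => RInt g1 0 x) 0 x); auto.
    apply filter_forall. intros; apply RIc; auto. }
  assert (DI2 : forall x, is_derive (fun x => RInt g2 0 x) x (g2 x)).
  { intros x. apply (is_derive_RInt (V := R_NormedModule) g2 (fun x => RInt g2 0 x) 0 x); auto.
    apply filter_forall. intros; apply RIc; auto. }
  assert (DP1 : forall x, is_derive P1 x (- c * P1 x + sech x ^ 2)).
  { intros x. unfold P1. eapply DReq.
    apply (DRmul (fun x => exp (- c * x)) (fun x => l1 + RInt g1 0 x)). apply Dexpl.
    apply (DRplus (fun _ => l1) (fun x => RInt g1 0 x)). apply (is_derive_const (K := R_AbsRing) (V := R_NormedModule) l1 x). apply DI1.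
    transitivity (- c * P1 x + (exp (- c * x) * exp (c * x)) * sech x ^ 2); [unfold P1, g1, gs; unfold zero; simpl; ring | rewrite Hexp; unfold P1; ring]. }
  assert (DP2 : forall x, is_derive P2 x (c * P2 x - sech x ^ 2)).
  { intros x. unfold P2. eapply DReq.
    apply (DRmul (fun x => exp (c * x)) (fun x => l2 + - RInt g2 0 x)). apply Dexpl.
    apply (DRplus (fun _ => l2) (fun x => Ropp (RInt g2 0 x))). apply (is_derive_const (K := R_AbsRing) (V := R_NormedModule) l2 x).
    apply (DRopp (fun x => RInt g2 0 x)). apply DI2.
    transitivity (c * P2 x - (exp (- c * x) * exp (c * x)) * sech x ^ 2); [unfold P2, g2, gs; unfold zero; simpl; replace (- - c * x) with (c * x) by ring; ring | rewrite Hexp; unfold P2; ring]. }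
  split.
  { intros x. apply (is_derive_ext (fun x => P1 x + P2 x)). intros; symmetry; apply HT.
    eapply DReq. apply (DRplus P1 P2); auto. ring. }
  split.
  { intros x. split.
    - apply (lim_ge (fun a => exp (- c * x) * RInt g1 a x) 0 _ (Rbar_locally m_infty)); auto.
      exists x. intros a Ha. apply Rmult_le_pos. left; apply exp_pos.
      apply RInt_ge_0. lra. apply exRc; auto. intros; apply gs_pos.
    - apply (lim_le (fun a => exp (- c * x) * RInt g1 a x) _ _ (Rbar_locally m_infty)); auto.
      exists x. intros a Ha.
      assert (RInt g1 a x <= RInt (fun y => exp (c * y)) a x).
      { apply RInt_le. lra. apply exRc; auto. apply exRc; intros; apply Cexpl.
        intros y _. unfold g1, gs. assert (H := exp_pos (c * y)). assert (H' := Hsech2 y). nra. }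
      rewrite RInt_expl in H by auto.
      assert (Ha' := exp_pos (c * a)). assert (He := exp_pos (- c * x)).
      assert (exp (- c * x) * RInt g1 a x <= exp (- c * x) * ((exp (c * x) - exp (c * a)) / c)) by (apply Rmult_le_compat_l; lra).
      assert (exp (- c * x) * ((exp (c * x) - exp (c * a)) / c) <= 1 / c).
      { unfold Rdiv. rewrite <- Rmult_assoc, Rmult_minus_distr_l, Hexp. apply Rmult_le_compat_r.
        left; apply Rinv_0_lt_compat; lra. nra. }
      lra. }
  split.
  { intros x. split.
    - apply (lim_ge (fun b => exp (c * x) * RInt g2 x b) 0 _ (Rbar_locally p_infty)); auto.
      exists x. intros b Hb. apply Rmult_le_pos. left; apply exp_pos.
      apply RInt_ge_0. lra. apply exRc; auto. intros; apply gs_pos.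
    - apply (lim_le (fun b => exp (c * x) * RInt g2 x b) _ _ (Rbar_locally p_infty)); auto.
      exists x. intros b Hb.
      assert (RInt g2 x b <= RInt (fun y => exp (- c * y)) x b).
      { apply RInt_le. lra. apply exRc; auto. apply exRc; intros; apply Cexpl.
        intros y _. unfold g2, gs. assert (H := exp_pos (- c * y)). assert (H' := Hsech2 y). nra. }
      rewrite RInt_expl in H by lra.
      assert (Hb' := exp_pos (- c * b)). assert (He := exp_pos (c * x)).
      assert (exp (c * x) * RInt g2 x b <= exp (c * x) * ((exp (- c * b) - exp (- c * x)) / - c)) by (apply Rmult_le_compat_l; lra).
      assert (exp (c * x) * ((exp (- c * b) - exp (- c * x)) / - c) <= 1 / c).
      { replace ((exp (- c * b) - exp (- c * x)) / - c) with ((exp (- c * x) - exp (- c * b)) / c) by (field; lra).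
        unfold Rdiv. rewrite <- Rmult_assoc, Rmult_minus_distr_l, (Rmult_comm (exp (c * x))), Hexp. apply Rmult_le_compat_r.
        left; apply Rinv_0_lt_compat; lra. nra. }
      lra. }
  split; intros x; eapply Cd; eauto.
Qed.


Lemma T_props :
  (forall x, is_derive T x (dT x)) /\ (forall x, continuous T x) /\ (forall x, continuous dT x) /\
  (forall x, Rabs (T x) <= 2) /\ (forall x, Rabs (dT x) <= 2).
Proof.
  destruct T_facts as (P1 & P2 & HT & HD & HB1 & HB2 & HC1 & HC2).
  assert (Hc := sqrt2_bounds).
  assert (E : forall x, dT x = sqrt 2 * (P2 x - P1 x)) by (intros; apply is_derive_unique, HD).
  assert (Hi : 1 / sqrt 2 < 1) by (apply Rmult_lt_reg_r with (sqrt 2); [lra|]; unfold Rdiv; rewrite Rmult_assoc, Rinv_l; lra).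
  assert (Hi2 : sqrt 2 * (1 / sqrt 2) = 1) by (field; lra).
  split; [intros x; rewrite E; apply HD|].
  split; [intros x; eapply Cd; apply HD|].
  split.
  { intros x. apply (continuous_ext (fun x => sqrt 2 * (P2 x - P1 x))). intros; symmetry; apply E.
    apply Kmul. apply Kconst. apply Kminus; auto. }
  split.
  { intros x. rewrite HT. specialize (HB1 x). specialize (HB2 x). apply Rabs_le. lra. }
  { intros x. rewrite E. specialize (HB1 x). specialize (HB2 x). rewrite Rabs_mult, Rabs_right by lra.
    assert (Rabs (P2 x - P1 x) <= 1 / sqrt 2) by (apply Rabs_le; lra).
    assert (sqrt 2 * Rabs (P2 x - P1 x) <= sqrt 2 * (1 / sqrt 2)) by (apply Rmult_le_compat_l; lra).
    lra. }
Qed.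

Lemma abs_mul_le a b A B : Rabs a <= A -> Rabs b <= B -> Rabs (a * b) <= A * B.
Proof.
  intros H1 H2. rewrite Rabs_mult. apply Rmult_le_compat; auto; apply Rabs_pos.
Qed.

Lemma sechk_le k x : (1 <= k)%nat -> Rabs (sech x ^ k) <= sech x.
Proof.
  intros Hk. assert (H := sech_pos x). assert (H1 := sech_le1 x).
  rewrite Rabs_right by (apply Rle_ge, pow_le; lra).
  destruct k as [|m]; [lia|]. simpl.
  assert (sech x ^ m <= 1) by (apply pow_le_1 || (rewrite <- (pow1 m); apply pow_incr; lra)).
  assert (0 <= sech x ^ m) by (apply pow_le; lra). nra.
Qed.

Lemma cos_abs x : Rabs (cos x) <= 1. Proof. apply Rabs_le, COS_bound. Qed.
Lemma sin_abs x : Rabs (sin x) <= 1. Proof. apply Rabs_le, SIN_bound. Qed.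

Lemma W_ge_sech x : sech x <= W x.
Proof. unfold W. assert (H := sech_pos x). assert (H2 := Rabs_pos x). nra. Qed.

Lemma W_ge_xsech x : Rabs x * sech x <= W x.
Proof. unfold W. assert (H := sech_pos x). assert (H2 := Rabs_pos x). nra. Qed.


Ltac kc HCT HCdT :=
  lazymatch goal with
  | |- continuous (fun t => @?f t * @?g t) _ => apply (Kmul f g); kc HCT HCdT
  | |- continuous (fun t => @?f t + @?g t) _ => apply (Kplus f g); kc HCT HCdT
  | |- continuous (fun t => @?f t - @?g t) _ => apply (Kminus f g); kc HCT HCdT
  | |- continuous (fun t => - @?f t) _ => apply (Kopp f); kc HCT HCdT
  | |- continuous (fun t => sech t ^ _) _ => apply Csechk
  | |- continuous (fun t => sech t) _ => apply Csech
  | |- continuous (fun t => tanh t) _ => apply Ctanh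
  | |- continuous (fun t => cos t) _ => apply Ccos
  | |- continuous (fun t => sin t) _ => apply Csin
  | |- continuous (fun t => ln (sech t)) _ => apply Clnsech
  | |- continuous (fun t => T t) _ => apply HCT
  | |- continuous (fun t => dT t) _ => apply HCdT
  | |- continuous (fun t => t) _ => apply Kid
  | |- continuous (fun t => _) _ => apply Kconst
  | |- continuous ?f _ => fail "kc: unknown" f
  end.

Ltac tsub x := replace (sech x ^ 2) with (1 - tanh x ^ 2) by (rewrite tanh_sech; ring).

Theorem lemma2p19 (k : nat) (hk : (1 <= k)%nat) :
  b_ k = INR (k + 1) * p_ (k + 2) - INR k * p_ k /\
  c_ k = INR (k + 1) * q_ (k + 2) - INR k * q_ k + p_ (k + 2) - p_ k /\
  d_ k = - INR k * a_ k + p_ k /\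
  e_ k = s_ k + INR k * r_ k - INR (k + 1) * r_ (k + 2) /\
  f_ k = - r_ k + INR k * s_ k.
Proof.
  destruct T_props as (HDT & HCT & HCdT & HBT & HBdT).
  assert (Hk2 : (1 <= k + 2)%nat) by lia.
  assert (Hp : forall j, (1 <= j)%nat -> IG (fun x => sech x ^ j * cos x) (p_ j)).
  { intros j Hj. apply (exD _ 1). intros x; kc HCT HCdT.
    intros x. eapply Rle_trans. apply (abs_mul_le _ _ (sech x) 1). apply sechk_le; auto. apply cos_abs.
    generalize (W_ge_sech x); lra. }
  assert (Hq : forall j, (1 <= j)%nat -> IG (fun x => sech x ^ j * ln (sech x) * cos x) (q_ j)).
  { intros j Hj. apply (exD _ 1). intros x; kc HCT HCdT.
    intros x. eapply Rle_trans. apply (abs_mul_le _ _ (sech x * Rabs x) 1). apply abs_mul_le. apply sechk_le; auto. apply lnsech_abs. apply cos_abs.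
    generalize (W_ge_xsech x); lra. }
  assert (Hr : forall j, (1 <= j)%nat -> IG (fun x => sech x ^ j * T x * cos x) (r_ j)).
  { intros j Hj. apply (exD _ 2). intros x; kc HCT HCdT.
    intros x. eapply Rle_trans. apply (abs_mul_le _ _ (sech x * 2) 1). apply abs_mul_le. apply sechk_le; auto. apply HBT. apply cos_abs.
    generalize (W_ge_sech x); lra. }
  assert (Hs : forall j, (1 <= j)%nat -> IG (fun x => sech x ^ j * T x * tanh x * sin x) (s_ j)).
  { intros j Hj. apply (exD _ 2). intros x; kc HCT HCdT.
    intros x. eapply Rle_trans. apply (abs_mul_le _ _ (sech x * 2 * 1) 1). apply abs_mul_le. apply abs_mul_le.
    apply sechk_le; auto. apply HBT. apply tanh_abs. apply sin_abs.
    generalize (W_ge_sech x); lra. }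
  assert (Ha : IG (fun x => x * sech x ^ k * tanh x * cos x) (a_ k)).
  { apply (exD _ 1). intros x; kc HCT HCdT.
    intros x. eapply Rle_trans. apply (abs_mul_le _ _ (Rabs x * sech x * 1) 1). apply abs_mul_le. apply abs_mul_le.
    lra. apply sechk_le; auto. apply tanh_abs. apply cos_abs.
    generalize (W_ge_xsech x); lra. }
  split.
  {
    set (F := fun x => - (sech x ^ k * tanh x * cos x)).
    set (F' := fun x => sech x ^ k * tanh x * sin x - (INR (k + 1) * sech x ^ (k + 2) - INR k * sech x ^ k) * cos x).
    assert (HD : forall x, is_derive F x (F' x)).
    { intros x. unfold F, F'. eapply DReq. apply DRopp. apply DRmul. apply DRmul. apply Dsechk. apply Dtanh. apply Dcos.
      rewrite pow_add, plus_INR. change (INR 1) with 1. tsub x. ring. }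
    assert (HB : forall x, Rabs (F x) <= 1 * W x).
    { intros x. unfold F. rewrite Rabs_Ropp. eapply Rle_trans. apply (abs_mul_le _ _ (sech x * 1) 1). apply abs_mul_le.
      apply sechk_le; auto. apply tanh_abs. apply cos_abs. generalize (W_ge_sech x); lra. }
    destruct (decay0 F 1 HB) as [L1 L2].
    assert (H0 := IG_deriv0 F F' HD ltac:(intros x; unfold F'; kc HCT HCdT) L1 L2).
    assert (H1 := IG_plus _ _ _ _ H0 (IG_minus _ _ _ _ (IG_scal _ (INR (k + 1)) _ (Hp (k + 2)%nat Hk2)) (IG_scal _ (INR k) _ (Hp k hk)))).
    apply (IG_ext _ (fun x => sech x ^ k * tanh x * sin x)) in H1.
    2:{ intros x. cbv beta. unfold F'. ring. }
    apply IG_intR in H1. unfold b_. rewrite H1. ring. }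
  split.
  {
    set (F := fun x => - (sech x ^ k * ln (sech x) * tanh x * cos x)).
    set (F' := fun x => sech x ^ k * ln (sech x) * tanh x * sin x - (ln (sech x) * (INR (k + 1) * sech x ^ (k + 2) - INR k * sech x ^ k) + sech x ^ (k + 2) - sech x ^ k) * cos x).
    assert (HD : forall x, is_derive F x (F' x)).
    { intros x. unfold F, F'. eapply DReq. apply DRopp. apply DRmul. apply DRmul. apply DRmul. apply Dsechk. apply Dlnsech. apply Dtanh. apply Dcos.
      rewrite pow_add, plus_INR. change (INR 1) with 1. tsub x. ring. }
    assert (HB : forall x, Rabs (F x) <= 1 * W x).
    { intros x. unfold F. rewrite Rabs_Ropp. eapply Rle_trans. apply (abs_mul_le _ _ (sech x * Rabs x * 1) 1). apply abs_mul_le. apply abs_mul_le.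
      apply sechk_le; auto. apply lnsech_abs. apply tanh_abs. apply cos_abs. generalize (W_ge_xsech x); lra. }
    destruct (decay0 F 1 HB) as [L1 L2].
    assert (H0 := IG_deriv0 F F' HD ltac:(intros x; unfold F'; kc HCT HCdT) L1 L2).
    assert (H1 := IG_plus _ _ _ _ H0 (IG_minus _ _ _ _ (IG_plus _ _ _ _ (IG_minus _ _ _ _ (IG_scal _ (INR (k + 1)) _ (Hq (k + 2)%nat Hk2)) (IG_scal _ (INR k) _ (Hq k hk))) (Hp (k + 2)%nat Hk2)) (Hp k hk))).
    apply (IG_ext _ (fun x => sech x ^ k * ln (sech x) * tanh x * sin x)) in H1.
    2:{ intros x. cbv beta. unfold F'. ring. }
    apply IG_intR in H1. unfold c_. rewrite H1. ring. }
  split.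
  {
    set (F := fun x => - (x * sech x ^ k * cos x)).
    set (F' := fun x => x * sech x ^ k * sin x - sech x ^ k * cos x + INR k * (x * sech x ^ k * tanh x * cos x)).
    assert (HD : forall x, is_derive F x (F' x)).
    { intros x. unfold F, F'. eapply DReq. apply DRopp. apply DRmul. apply DRmul. apply DRid. apply Dsechk. apply Dcos.
      cbv beta. ring. }
    assert (HB : forall x, Rabs (F x) <= 1 * W x).
    { intros x. unfold F. rewrite Rabs_Ropp. eapply Rle_trans. apply (abs_mul_le _ _ (Rabs x * sech x) 1). apply abs_mul_le.
      lra. apply sechk_le; auto. apply cos_abs. generalize (W_ge_xsech x); lra. }
    destruct (decay0 F 1 HB) as [L1 L2].
    assert (H0 := IG_deriv0 F F' HD ltac:(intros x; unfold F'; kc HCT HCdT) L1 L2).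
    assert (H1 := IG_plus _ _ _ _ H0 (IG_minus _ _ _ _ (Hp k hk) (IG_scal _ (INR k) _ Ha))).
    apply (IG_ext _ (fun x => x * sech x ^ k * sin x)) in H1.
    2:{ intros x. cbv beta. unfold F'. ring. }
    apply IG_intR in H1. unfold d_. rewrite H1. ring. }
  split.
  {
    set (F := fun x => sech x ^ k * tanh x * T x * cos x).
    set (F' := fun x => (INR (k + 1) * sech x ^ (k + 2) - INR k * sech x ^ k) * T x * cos x + sech x ^ k * tanh x * dT x * cos x - sech x ^ k * T x * tanh x * sin x).
    assert (HD : forall x, is_derive F x (F' x)).
    { intros x. unfold F, F'. eapply DReq. apply DRmul. apply DRmul. apply DRmul. apply Dsechk. apply Dtanh. apply HDT. apply Dcos.
      rewrite pow_add, plus_INR. change (INR 1) with 1. tsub x. ring. }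
    assert (HB : forall x, Rabs (F x) <= 2 * W x).
    { intros x. unfold F. eapply Rle_trans. apply (abs_mul_le _ _ (sech x * 1 * 2) 1). apply abs_mul_le. apply abs_mul_le.
      apply sechk_le; auto. apply tanh_abs. apply HBT. apply cos_abs. generalize (W_ge_sech x); lra. }
    destruct (decay0 F 2 HB) as [L1 L2].
    assert (H0 := IG_deriv0 F F' HD ltac:(intros x; unfold F'; kc HCT HCdT) L1 L2).
    assert (H1 := IG_plus _ _ _ _ (IG_minus _ _ _ _ H0 (IG_minus _ _ _ _ (IG_scal _ (INR (k + 1)) _ (Hr (k + 2)%nat Hk2)) (IG_scal _ (INR k) _ (Hr k hk)))) (Hs k hk)).
    apply (IG_ext _ (fun x => sech x ^ k * tanh x * dT x * cos x)) in H1.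
    2:{ intros x. cbv beta. unfold F'. ring. }
    apply IG_intR in H1. unfold e_. rewrite H1. ring. }
  {
    set (F := fun x => sech x ^ k * T x * sin x).
    set (F' := fun x => - INR k * sech x ^ k * tanh x * T x * sin x + sech x ^ k * dT x * sin x + sech x ^ k * T x * cos x).
    assert (HD : forall x, is_derive F x (F' x)).
    { intros x. unfold F, F'. eapply DReq. apply DRmul. apply DRmul. apply Dsechk. apply HDT. apply Dsin.
      cbv beta. ring. }
    assert (HB : forall x, Rabs (F x) <= 2 * W x).
    { intros x. unfold F. eapply Rle_trans. apply (abs_mul_le _ _ (sech x * 2) 1). apply abs_mul_le.
      apply sechk_le; auto. apply HBT. apply sin_abs. generalize (W_ge_sech x); lra. }
    destruct (decay0 F 2 HB) as [L1 L2].
    assert (H0 := IG_deriv0 F F' HD ltac:(intros x; unfold F'; kc HCT HCdT) L1 L2).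
    assert (H1 := IG_minus _ _ _ _ (IG_plus _ _ _ _ H0 (IG_scal _ (INR k) _ (Hs k hk))) (Hr k hk)).
    apply (IG_ext _ (fun x => sech x ^ k * dT x * sin x)) in H1.
    2:{ intros x. cbv beta. unfold F'. ring. }
    apply IG_intR in H1. unfold f_. rewrite H1. ring. }
Qed.
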